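(* Let $\mathcal{R}^{rsc}$ be a rich single-crossing domain, let $\{R^n\}_{n\ge1}\subseteq\mathcal{R}^{rsc}$ converge to $R\in\mathcal{R}^{rsc}$ in the order topology, and let $(t^{1n},q^{1n})\to(t^1,q^1)$ and $(t^{2n},q^{2n})\to(t^2,q^2)$ be convergent sequences in $\mathbb{Z}$ (Euclidean topology). If $(t^{1n},q^{1n})\,I^n\,(t^{2n},q^{2n})$ for all $n$, where $I^n$ is the indifference relation of $R^n$, then $(t^1,q^1)\,I\,(t^2,q^2)$, where $I$ is the indifference relation of $R$.
   Context: $\mathbb{Z}=[0,\infty)\times[0,1]$. A classical preference is a complete transitive relation $R$ on $\mathbb{Z}$ (strict part $P$, indifference $I$) such that: for all $q$, $t''>t'$ implies $(t',q)P(t'',q)$; for all $t$, $q''>q'$ implies $(t,q'')P(t,q')$; upper and lower contour sets $\{x:xRz\},\{x:zRx\}$ are closed. Two distinct classical preferences satisfy single-crossing if any indifference set of one meets any indifference set of the other in at most one point. A rich single-crossing domain $\mathcal{R}^{rsc}$ is a set of pairwise single-crossing classical preferences such that for all $(t',q'),(t'',q'')$ with $t'<t''$, $q'<q''$ some member is indifferent between them. Writing $(t',q')<(t'',q'')$ for $t'<t''$, $q'<q''$ and $\square(z)=\{x:x=z\text{ or }x<z\}$, for distinct $R',R''$ in the domain, $R'\prec R''$ means $\square(z)\cap\{x:xR''z\}\subseteq\square(z)\cap\{x:xR'z\}$ for every $z$. $\prec$ is a linear order, and $\mathcal{R}^{rsc}$ carries the associated order topology. *)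

(* Defs.v *)
From Stdlib Require Import Reals.
From Coquelicot Require Import Coquelicot.
Open Scope R_scope.

Definition pt := (R * R)%type.
Definition inZ (x : pt) : Prop := 0 <= fst x /\ 0 <= snd x <= 1.

(* A (weak) preference relation; [pref_rel R x y] reads "x R y". *)
Definition pref := pt -> pt -> Prop.

Definition strict (Rl : pref) (x y : pt) : Prop := Rl x y /\ ~ Rl y x.
Definition indiff (Rl : pref) (x y : pt) : Prop := Rl x y /\ Rl y x.

(* Contour sets are subsets of Z; since Z is closed in R^2,
   being closed in Z is the same as being closed in R^2 (Coquelicot [closed]). *)
Definition classical (Rl : pref) : Prop :=
  (forall x y, Rl x y -> inZ x /\ inZ y) /\
  (forall x y, inZ x -> inZ y -> Rl x y \/ Rl y x) /\
  (forall x y z, Rl x y -> Rl y z -> Rl x z) /\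
  (forall t1 t2 q, inZ (t1, q) -> inZ (t2, q) -> t2 > t1 ->
      strict Rl (t1, q) (t2, q)) /\
  (forall t q1 q2, inZ (t, q1) -> inZ (t, q2) -> q2 > q1 ->
      strict Rl (t, q2) (t, q1)) /\
  (forall z, inZ z -> closed (fun x : R * R => Rl x z)) /\
  (forall z, inZ z -> closed (fun x : R * R => Rl z x)).

Definition single_crossing (R1 R2 : pref) : Prop :=
  forall z1 z2 x y, inZ z1 -> inZ z2 -> inZ x -> inZ y ->
    indiff R1 x z1 -> indiff R2 x z2 ->
    indiff R1 y z1 -> indiff R2 y z2 -> x = y.

Definition ltZ (x y : pt) : Prop := fst x < fst y /\ snd x < snd y.

Definition rich_single_crossing (D : pref -> Prop) : Prop :=
  (forall Rl, D Rl -> classical Rl) /\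
  (forall R1 R2, D R1 -> D R2 -> R1 <> R2 -> single_crossing R1 R2) /\
  (forall x y, inZ x -> inZ y -> ltZ x y ->
     exists Rl, D Rl /\ indiff Rl x y).

Definition box (z x : pt) : Prop := x = z \/ ltZ x z.

Definition prec (R1 R2 : pref) : Prop :=
  R1 <> R2 /\
  forall z x, inZ z -> inZ x -> box z x -> R2 x z -> R1 x z.

(* Convergence in the order topology of (D, ≺): the open rays
   {A | A0 ≺ A} and {A | A ≺ B0} (A0, B0 in D) form a subbasis, so a
   sequence converges to R0 iff it eventually enters every open ray
   containing R0. *)
Definition order_converges (D : pref -> Prop) (Rn : nat -> pref) (R0 : pref)
  : Prop :=
  (forall A, D A -> prec A R0 -> exists N, forall n, (N <= n)%nat -> prec A (Rn n)) /\
  (forall B, D B -> prec R0 B -> exists N, forall n, (N <= n)%nat -> prec (Rn n) B).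

(* Main.v *)
Require Import Defs.
From Stdlib Require Import Reals Lra Lia Classical.
From Coquelicot Require Import Coquelicot.
Open Scope R_scope.

Lemma ballR (a c e : R) : ball a e c <-> Rabs (c - a) < e.
Proof. unfold ball; simpl. unfold AbsRing_ball, abs, minus, plus, opp; simpl. tauto. Qed.
Lemma ballP (x y : R*R) e : ball x e y <-> Rabs (fst y - fst x) < e /\ Rabs (snd y - snd x) < e.
Proof. destruct x, y. unfold ball; simpl. unfold prod_ball. rewrite <- !ballR. simpl. tauto. Qed.

Lemma closed_nbhd (S : R*R -> Prop) x0 : closed S -> ~ S x0 ->
  exists e, 0 < e /\ forall y, Rabs (fst y - fst x0) < e -> Rabs (snd y - snd x0) < e -> ~ S y.
Proof.
  intros HC HS.
  assert (H : locally x0 (fun x => ~ S x)).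
  { apply NNPP; intro H; apply HS; apply HC; exact H. }
  destruct H as [eps He]. exists eps. split; [apply cond_pos|].
  intros y H1 H2. apply He. apply ballP. auto.
Qed.

Lemma cl_Z Rl x y : classical Rl -> Rl x y -> inZ x /\ inZ y.
Proof. intros H; apply H. Qed.
Lemma cl_tot Rl x y : classical Rl -> inZ x -> inZ y -> Rl x y \/ Rl y x.
Proof. intros H; apply H. Qed.
Lemma cl_trans Rl x y z : classical Rl -> Rl x y -> Rl y z -> Rl x z.
Proof. intros H; apply H. Qed.
Lemma cl_refl Rl x : classical Rl -> inZ x -> Rl x x.
Proof. intros H Hx. destruct (cl_tot Rl x x H Hx Hx); auto. Qed.
Lemma cl_cl1 Rl z : classical Rl -> inZ z -> closed (fun x : R * R => Rl x z).
Proof. intros H; apply H. Qed.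
Lemma cl_cl2 Rl z : classical Rl -> inZ z -> closed (fun x : R * R => Rl z x).
Proof. intros H; apply H. Qed.
Lemma not_R_strict Rl a b : classical Rl -> inZ a -> inZ b -> ~ Rl b a -> strict Rl a b.
Proof. intros H Ha Hb Hn. split; auto. destruct (cl_tot Rl a b H Ha Hb); tauto. Qed.
Lemma strict_trans1 Rl a b c : classical Rl -> strict Rl a b -> Rl b c -> strict Rl a c.
Proof. intros H [H1 H2] H3. split. eapply cl_trans; eauto. intro H4. apply H2. eapply cl_trans; eauto. Qed.
Lemma strict_trans2 Rl a b c : classical Rl -> Rl a b -> strict Rl b c -> strict Rl a c.
Proof. intros H H1 [H2 H3]. split. eapply cl_trans; eauto. intro H4. apply H3. eapply cl_trans; eauto. Qed.

Lemma dom Rl p w : classical Rl -> inZ p -> inZ w -> fst p <= fst w -> snd w <= snd p ->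
  Rl p w /\ (p <> w -> strict Rl p w).
Proof.
  intros H Hp Hw H1 H2.
  pose proof H as H'.
  destruct H' as (Hz & Hc & Ht & Hmt & Hmq & _ & _).
  destruct p as [tp qp], w as [tw qw]; simpl in *.
  unfold inZ in *; simpl in *.
  assert (Hm : inZ (tp, qw)) by (unfold inZ; simpl; lra).
  assert (A1 : Rl (tp,qp) (tp,qw) /\ (qw < qp -> strict Rl (tp,qp) (tp,qw))).
  { destruct (Rle_lt_or_eq_dec _ _ H2) as [Hl|He].
    - pose proof (Hmq tp qw qp Hm (ltac:(unfold inZ; simpl; lra)) Hl) as S. split; [apply S| auto].
    - subst. split; [apply cl_refl; auto; unfold inZ; simpl; lra| intros; lra]. }
  assert (A2 : Rl (tp,qw) (tw,qw) /\ (tp < tw -> strict Rl (tp,qw) (tw,qw))).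
  { destruct (Rle_lt_or_eq_dec _ _ H1) as [Hl|He].
    - pose proof (Hmt tp tw qw Hm (ltac:(unfold inZ; simpl; lra)) Hl) as S. split; [apply S| auto].
    - subst. split; [apply cl_refl; auto| intros; lra]. }
  split. apply (cl_trans Rl _ (tp,qw) _ H); [apply (proj1 A1)|apply (proj1 A2)].
  intro Hne.
  destruct (Rle_lt_or_eq_dec _ _ H2) as [Hl|He].
  - apply (strict_trans1 Rl _ (tp,qw) _ H); [apply (proj2 A1); auto | apply (proj1 A2)].
  - destruct (Rle_lt_or_eq_dec _ _ H1) as [Hl'|He'].
    + apply (strict_trans2 Rl _ (tp,qw) _ H); [apply (proj1 A1) | apply (proj2 A2); auto].
    + subst. exfalso; auto.
Qed.

Definition G (t s : R) : pt := (t + Rmax (s - 1) 0, 1 - Rmin s 1).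

Lemma G_inZ t s : 0 <= t -> 0 <= s -> inZ (G t s).
Proof. intros. unfold G, inZ; simpl; unfold Rmax, Rmin; repeat destruct Rle_dec; lra. Qed.

Lemma G_inj t s1 s2 : G t s1 = G t s2 -> s1 = s2.
Proof. unfold G; intro H; injection H; unfold Rmax, Rmin; repeat destruct Rle_dec; lra. Qed.

Lemma G_mono Rl t s1 s2 : classical Rl -> 0 <= t -> 0 <= s1 -> s1 <= s2 ->
  Rl (G t s1) (G t s2) /\ (s1 < s2 -> strict Rl (G t s1) (G t s2)).
Proof.
  intros H Ht H1 H2.
  destruct (dom Rl (G t s1) (G t s2) H) as [D1 D2].
  apply G_inZ; lra. apply G_inZ; lra.
  unfold G; simpl; unfold Rmax, Rmin; repeat destruct Rle_dec; lra.
  unfold G; simpl; unfold Rmax, Rmin; repeat destruct Rle_dec; lra.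
  split; auto. intro Hl. apply D2. intro He. apply G_inj in He. lra.
Qed.

Lemma G_lip t s s' : Rabs (fst (G t s) - fst (G t s')) <= Rabs (s - s') /\
                     Rabs (snd (G t s) - snd (G t s')) <= Rabs (s - s').
Proof.
  unfold G; simpl. unfold Rmax, Rmin. repeat destruct Rle_dec; split; unfold Rabs; repeat destruct Rcase_abs; lra.
Qed.

Lemma root Rl t v : classical Rl -> inZ v -> 0 <= t -> t <= fst v ->
  exists s, 0 <= s /\ indiff Rl (G t s) v.
Proof.
  intros H Hv Ht Htv.
  set (E := fun s => 0 <= s <= fst v + 2 /\ Rl (G t s) v).
  assert (Hv' := Hv). destruct Hv' as [Hv1 Hv2].
  assert (E0 : E 0).
  { split. lra. refine (proj1 (dom Rl (G t 0) v H _ _ _ _)); auto. apply G_inZ; lra.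
    unfold G; simpl; unfold Rmax, Rmin; repeat destruct Rle_dec; lra.
    unfold G; simpl; unfold Rmax, Rmin; repeat destruct Rle_dec; lra. }
  destruct (completeness E) as [m [Hub Hlub]].
  { exists (fst v + 2). intros s Hs. apply Hs. }
  { exists 0; auto. }
  assert (Hm0 : 0 <= m) by (apply Hub; auto).
  assert (Hm1 : m <= fst v + 2) by (apply Hlub; intros s Hs; apply Hs).
  assert (Hend : ~ Rl (G t (fst v + 2)) v).
  { intro Hc. destruct (dom Rl v (G t (fst v + 2)) H Hv) as [_ D].
    apply G_inZ; lra.
    unfold G; simpl; unfold Rmax, Rmin; repeat destruct Rle_dec; lra.
    unfold G; simpl; unfold Rmax, Rmin; repeat destruct Rle_dec; lra.
    destruct D as [_ D]. intro He. rewrite <- He in Hc. unfold G in He. destruct v; injection He.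
    simpl in *. unfold Rmax, Rmin; repeat destruct Rle_dec; lra. tauto. }
  assert (H1 : Rl (G t m) v).
  { apply NNPP; intro Hn.
    destruct (closed_nbhd _ _ (cl_cl1 Rl v H Hv) Hn) as [e [He Hne]].
    assert (Hex : exists s, E s /\ m - e < s).
    { apply NNPP; intro Hx.
      assert (m <= m - e). { apply Hlub. intros s Hs. destruct (Rle_lt_dec s (m - e)); auto.
        exfalso; apply Hx; eauto. }
      lra. }
    destruct Hex as [s [Hs Hms]].
    assert (s <= m) by (apply Hub; auto).
    destruct (G_lip t s m) as [L1 L2].
    apply (Hne (G t s)).
    assert (Rabs (s - m) < e) by (unfold Rabs; destruct Rcase_abs; lra). lra. 
    assert (Rabs (s - m) < e) by (unfold Rabs; destruct Rcase_abs; lra). lra.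
    apply Hs. }
  assert (Hmlt : m < fst v + 2).
  { destruct (Rle_lt_or_eq_dec _ _ Hm1) as [Hl|Heq]; auto. rewrite Heq in H1. tauto. }
  assert (H2 : Rl v (G t m)).
  { apply NNPP; intro Hn.
    destruct (closed_nbhd _ _ (cl_cl2 Rl v H Hv) Hn) as [e [He Hne]].
    set (s := m + Rmin e (fst v + 2 - m) / 2).
    assert (Hmin : 0 < Rmin e (fst v + 2 - m) /\ Rmin e (fst v + 2 - m) <= e /\
                   Rmin e (fst v + 2 - m) <= fst v + 2 - m)
      by (unfold Rmin; destruct Rle_dec; lra).
    assert (Hs : E s).
    { split. unfold s; lra.
      destruct (cl_tot Rl (G t s) v H) as [Hg|Hg]; auto. apply G_inZ; unfold s; lra.
      exfalso. destruct (G_lip t s m) as [L1 L2].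
      apply (Hne (G t s)); auto.
      assert (Rabs (s - m) < e) by (unfold s, Rabs; destruct Rcase_abs; lra). lra.
      assert (Rabs (s - m) < e) by (unfold s, Rabs; destruct Rcase_abs; lra). lra. }
    assert (s <= m) by (apply Hub; auto). unfold s in *; lra. }
  exists m. split; auto. split; auto.
Qed.

Lemma root_lt Rl t s r v : classical Rl -> 0 <= t -> 0 <= s -> indiff Rl (G t r) v -> s < r ->
  strict Rl (G t s) v.
Proof.
  intros H Ht Hs [H1 H2] Hsr.
  apply (strict_trans1 Rl _ (G t r) _ H); auto. apply (G_mono Rl t s r H); lra.
Qed.

Lemma root_gt Rl t s r v : classical Rl -> 0 <= t -> 0 <= r -> indiff Rl (G t r) v -> r < s ->
  strict Rl v (G t s).
Proof.
  intros H Ht Hr [H1 H2] Hsr.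
  apply (strict_trans2 Rl _ (G t r) _ H); auto. apply (G_mono Rl t r s H); lra.
Qed.

Lemma interm Rl p w : classical Rl -> strict Rl p w ->
  exists m, inZ m /\ strict Rl p m /\ strict Rl m w.
Proof.
  intros H Hpw.
  destruct (cl_Z Rl p w H (proj1 Hpw)) as [Hp Hw].
  destruct (root Rl 0 p H Hp) as [sp [Hsp Ip]]. lra. apply Hp.
  destruct (root Rl 0 w H Hw) as [sw [Hsw Iw]]. lra. apply Hw.
  assert (Hlt : sp < sw).
  { destruct (Rlt_le_dec sp sw); auto. exfalso.
    destruct (G_mono Rl 0 sw sp H) as [M _]; try lra.
    apply (proj2 Hpw). apply (cl_trans Rl _ (G 0 sw) _ H). apply Iw.
    apply (cl_trans Rl _ (G 0 sp) _ H). exact M. apply Ip. }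
  exists (G 0 ((sp + sw)/2)). split. apply G_inZ; lra. split.
  - apply (strict_trans2 Rl _ (G 0 sp) _ H). apply Ip. apply (G_mono Rl 0 sp _ H); lra.
  - apply (strict_trans1 Rl _ (G 0 sw) _ H). apply (G_mono Rl 0 _ sw H); lra. apply Iw.
Qed.

Lemma strict_open Rl p0 w0 : classical Rl -> strict Rl p0 w0 ->
  exists e, 0 < e /\ forall p w, inZ p -> inZ w ->
    Rabs (fst p - fst p0) < e -> Rabs (snd p - snd p0) < e ->
    Rabs (fst w - fst w0) < e -> Rabs (snd w - snd w0) < e -> strict Rl p w.
Proof.
  intros H Hpw.
  destruct (interm Rl p0 w0 H Hpw) as [m [Hm [Hpm Hmw]]].
  destruct (closed_nbhd _ p0 (cl_cl2 Rl m H Hm) (proj2 Hpm)) as [e1 [He1 N1]].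
  destruct (closed_nbhd _ w0 (cl_cl1 Rl m H Hm) (proj2 Hmw)) as [e2 [He2 N2]].
  exists (Rmin e1 e2). split. unfold Rmin; destruct Rle_dec; lra.
  intros p w Hp Hw A1 A2 A3 A4.
  assert (Rmin e1 e2 <= e1 /\ Rmin e1 e2 <= e2) by (unfold Rmin; destruct Rle_dec; lra).
  apply (strict_trans1 Rl _ m _ H).
  - apply not_R_strict; auto. apply N1; lra.
  - apply (proj1 (not_R_strict Rl m w H Hm Hw (N2 w ltac:(lra) ltac:(lra)))).
Qed.

Definition PosP (A B : pref) (t : R) (z : pt) : Prop :=
  exists s, 0 <= s /\ strict A (G t s) z /\ strict B z (G t s).

Lemma excl A B t z : classical A -> classical B -> 0 <= t -> PosP A B t z -> PosP B A t z -> False.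
Proof.
  intros HA HB Ht [s1 [H1 [P1 P2]]] [s2 [H2 [Q1 Q2]]].
  destruct (Rle_lt_dec s1 s2).
  - destruct (G_mono B t s1 s2 HB) as [M _]; auto.
    assert (S : strict B (G t s2) (G t s1)).
    { apply (strict_trans1 B _ z _ HB); auto. apply P2. }
    apply (proj2 S); auto.
  - destruct (G_mono A t s2 s1 HA) as [M _]; auto; try lra.
    assert (S : strict A (G t s1) (G t s2)).
    { apply (strict_trans1 A _ z _ HA); auto. apply Q2. }
    apply (proj2 S); auto.
Qed.

Lemma pos_of_roots A B t z sA sB : classical A -> classical B -> 0 <= t -> 0 <= sA -> 0 <= sB ->
  indiff A (G t sA) z -> indiff B (G t sB) z -> sB < sA -> PosP A B t z.
Proof.
  intros HA HB Ht HsA HsB IA IB Hlt.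
  exists ((sA + sB)/2). split. lra. split.
  - apply (root_lt A t _ sA z HA); auto; lra.
  - apply (root_gt B t _ sB z HB); auto; lra.
Qed.

Lemma dich A B t z : classical A -> classical B -> single_crossing A B -> inZ z ->
  0 <= t -> t < fst z -> 0 < snd z -> PosP A B t z \/ PosP B A t z.
Proof.
  intros HA HB SC Hz Ht Htz Hqz.
  destruct (root A t z HA Hz Ht) as [sA [HsA IA]]. lra.
  destruct (root B t z HB Hz Ht) as [sB [HsB IB]]. lra.
  destruct (total_order_T sA sB) as [[Hl|He]|Hg].
  - right. apply (pos_of_roots B A t z sB sA); auto.
  - exfalso. subst.
    assert (Heq : G t sB = z).
    { apply (SC z z (G t sB) z); auto. apply G_inZ; lra.
      split; apply cl_refl; auto. split; apply cl_refl; auto. }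
    destruct z as [c d]. unfold G in Heq. injection Heq. simpl in *.
    unfold Rmax, Rmin; repeat destruct Rle_dec; lra.
  - left. apply (pos_of_roots A B t z sA sB); auto.
Qed.

Lemma init A B a b z : classical A -> classical B -> inZ (a,b) -> inZ z -> a < fst z ->
  A (a,b) z -> ~ B (a,b) z -> PosP A B a z.
Proof.
  intros HA HB Hx Hz Hlt HAx HBx.
  destruct Hx as [Ha Hb].  simpl in *.
  destruct (root A a z HA Hz Ha) as [sA [HsA IA]]. lra.
  destruct (root B a z HB Hz Ha) as [sB [HsB IB]]. lra.
  assert (Gx : G a (1 - b) = (a,b)).
  { unfold G. f_equal; unfold Rmax, Rmin; repeat destruct Rle_dec; lra. }
  apply (pos_of_roots A B a z sA sB); auto.
  assert (H1 : sB < 1 - b).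
  { destruct (Rlt_le_dec sB (1-b)); auto. exfalso. apply HBx. rewrite <- Gx.
    apply (cl_trans B _ (G a sB) _ HB). apply (proj1 (G_mono B a (1-b) sB HB ltac:(lra) ltac:(lra) ltac:(lra))). apply IB. }
  assert (H2 : 1 - b <= sA).
  { destruct (Rlt_le_dec sA (1-b)); auto. exfalso.
    assert (S : strict A z (G a (1 - b))) by (apply (root_gt A a _ sA z HA); auto; lra).
    rewrite Gx in S. apply (proj2 S). auto. }
  lra.
Qed.

Lemma connect (P Q : R -> Prop) : P 0 -> Q 1 ->
  (forall l, 0 <= l <= 1 -> P l \/ Q l) ->
  (forall l, 0 <= l <= 1 -> P l -> Q l -> False) ->
  (forall l0, 0 <= l0 <= 1 -> P l0 -> exists d, 0 < d /\ forall l, 0 <= l <= 1 -> Rabs (l - l0) < d -> P l) ->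
  (forall l0, 0 <= l0 <= 1 -> Q l0 -> exists d, 0 < d /\ forall l, 0 <= l <= 1 -> Rabs (l - l0) < d -> Q l) ->
  False.
Proof.
  intros P0 Q1 Hd He HoP HoQ.
  set (E := fun l => 0 <= l <= 1 /\ forall m, 0 <= m <= l -> P m).
  assert (E0 : E 0).
  { split. lra. intros m Hm. replace m with 0 by lra. auto. }
  destruct (completeness E) as [s [Hub Hlub]].
  { exists 1. intros l Hl. apply Hl. }
  { exists 0; auto. }
  assert (Hs0 : 0 <= s) by (apply Hub; auto).
  assert (Hs1 : s <= 1) by (apply Hlub; intros l Hl; apply Hl).
  assert (Key : forall m, 0 <= m < s -> P m).
  { intros m Hm. apply NNPP; intro Hn.
    assert (s <= m).
    { apply Hlub. intros l Hl. destruct (Rle_lt_dec l m); auto. exfalso. apply Hn.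
      apply Hl. lra. }
    lra. }
  destruct (Hd s) as [Ps|Qs]; [lra| |].
  - destruct (HoP s) as [d [Hd0 Hdp]]; [lra|auto|].
    destruct (Rle_lt_or_eq_dec _ _ Hs1) as [Hlt|Heq].
    + set (l := s + Rmin d (1 - s) / 2).
      assert (Hmin : 0 < Rmin d (1 - s) /\ Rmin d (1 - s) <= d /\ Rmin d (1 - s) <= 1 - s)
        by (unfold Rmin; destruct Rle_dec; lra).
      assert (El : E l).
      { split. unfold l; lra. intros m Hm.
        destruct (Rlt_le_dec m s). apply Key; lra.
        apply Hdp. unfold l in *; lra. unfold l in *; unfold Rabs; destruct Rcase_abs; lra. }
      assert (l <= s) by (apply Hub; auto). unfold l in *; lra.
    + subst. apply (He 1); auto; lra.
  - destruct (HoQ s) as [d [Hd0 Hdq]]; [lra|auto|].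
    destruct (Rle_lt_or_eq_dec _ _ Hs0) as [Hlt|Heq].
    + set (m := s - Rmin d s / 2).
      assert (Hmin : 0 < Rmin d s /\ Rmin d s <= d /\ Rmin d s <= s)
        by (unfold Rmin; destruct Rle_dec; lra).
      apply (He m). unfold m; lra. apply Key; unfold m; lra.
      apply Hdq. unfold m; lra. unfold m; unfold Rabs; destruct Rcase_abs; lra.
    + rewrite <- Heq in Qs. apply (He 0); auto; lra.
Qed.

Ltac rabs := unfold Rabs in *; repeat destruct Rcase_abs; lra.

Lemma small_mul l l0 e K k : 0 < e -> Rabs k <= K -> Rabs (l - l0) < e / (1 + K) ->
  Rabs ((l - l0) * k) < e.
Proof.
  intros He Hk Hl. rewrite Rabs_mult.
  assert (HK : 0 <= K) by (pose proof (Rabs_pos k); lra).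
  assert (H1 : Rabs (l-l0) * (1 + K) < e).
  { apply (Rmult_lt_compat_r (1+K)) in Hl; [|lra].
    replace (e / (1 + K) * (1 + K)) with e in Hl by (field; lra). lra. }
  assert (H2 : Rabs (l - l0) * Rabs k <= Rabs (l-l0) * K)
    by (apply Rmult_le_compat_l; auto; apply Rabs_pos).
  pose proof (Rabs_pos (l - l0)). nra.
Qed.

Lemma pos_open A B a a' c c' d d' l0 : classical A -> classical B ->
  (forall l, 0 <= l <= 1 -> 0 <= a + l*(a'-a) /\ inZ (c + l*(c'-c), d + l*(d'-d))) ->
  0 <= l0 <= 1 -> PosP A B (a + l0*(a'-a)) (c + l0*(c'-c), d + l0*(d'-d)) ->
  exists dl, 0 < dl /\ forall l, 0 <= l <= 1 -> Rabs (l - l0) < dl ->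
     PosP A B (a + l*(a'-a)) (c + l*(c'-c), d + l*(d'-d)).
Proof.
  intros HA HB Hdom Hl0 [s [Hs [P1 P2]]].
  destruct (strict_open A _ _ HA P1) as [e1 [He1 O1]].
  destruct (strict_open B _ _ HB P2) as [e2 [He2 O2]].
  set (e := Rmin e1 e2).
  assert (He : 0 < e /\ e <= e1 /\ e <= e2) by (unfold e, Rmin; destruct Rle_dec; lra).
  set (K := Rabs (a'-a) + Rabs (c'-c) + Rabs (d'-d)).
  pose proof (Rabs_pos (a'-a)); pose proof (Rabs_pos (c'-c)); pose proof (Rabs_pos (d'-d)).
  exists (e / (1 + K)). split.
  { apply Rdiv_lt_0_compat. lra. unfold K; lra. }
  intros l Hl Hll.
  destruct (Hdom l Hl) as [Ht Hz].
  assert (B1 : Rabs ((l - l0) * (a'-a)) < e) by (apply (small_mul _ _ _ K); [lra| unfold K; lra | auto]).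
  assert (B2 : Rabs ((l - l0) * (c'-c)) < e) by (apply (small_mul _ _ _ K); [lra| unfold K; lra | auto]).
  assert (B3 : Rabs ((l - l0) * (d'-d)) < e) by (apply (small_mul _ _ _ K); [lra| unfold K; lra | auto]).
  assert (F1 : Rabs (fst (G (a + l * (a' - a)) s) - fst (G (a + l0 * (a' - a)) s)) < e).
  { unfold G; simpl.
    replace (a + l * (a' - a) + Rmax (s - 1) 0 - (a + l0 * (a' - a) + Rmax (s - 1) 0))
      with ((l - l0) * (a'-a)) by ring. auto. }
  assert (F2 : Rabs (snd (G (a + l * (a' - a)) s) - snd (G (a + l0 * (a' - a)) s)) < e).
  { unfold G; simpl. replace (1 - Rmin s 1 - (1 - Rmin s 1)) with 0 by ring. rewrite Rabs_R0; lra. }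
  assert (F3 : Rabs (c + l * (c' - c) - (c + l0 * (c' - c))) < e).
  { replace (c + l * (c' - c) - (c + l0 * (c' - c))) with ((l - l0) * (c'-c)) by ring. auto. }
  assert (F4 : Rabs (d + l * (d' - d) - (d + l0 * (d' - d))) < e).
  { replace (d + l * (d' - d) - (d + l0 * (d' - d))) with ((l - l0) * (d'-d)) by ring. auto. }
  exists s. split; auto. split.
  - apply O1; auto. apply G_inZ; auto. lra. lra. simpl; lra. simpl; lra.
  - apply O2; auto. apply G_inZ; auto. simpl; lra. simpl; lra. lra. lra.
Qed.

Lemma CL A B x z x' z' : classical A -> classical B -> single_crossing A B ->
  inZ x -> inZ z -> inZ x' -> inZ z' -> ltZ x z -> A x z -> ~ B x z ->
  ltZ x' z' -> B x' z' -> ~ A x' z' -> False.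
Proof.
  intros HA HB SC Hx Hz Hx' Hz' Lxz HAxz HBxz Lxz' HBxz' HAxz'.
  destruct x as [a b], z as [c d], x' as [a' b'], z' as [c' d'].
  pose proof Hx as Hx0. pose proof Hz as Hz0. pose proof Hx' as Hx0'. pose proof Hz' as Hz0'.
  unfold ltZ, inZ in *; simpl in *.
  assert (Hdom : forall l, 0 <= l <= 1 -> 0 <= a + l*(a'-a) /\ inZ (c + l*(c'-c), d + l*(d'-d))
       /\ a + l*(a'-a) < c + l*(c'-c) /\ 0 < d + l*(d'-d)).
  { intros l Hl. unfold inZ; simpl.
    assert (0 <= l * a') by (apply Rmult_le_pos; lra).
    assert (0 <= (1-l) * a) by (apply Rmult_le_pos; lra).
    assert (0 <= l * c') by (apply Rmult_le_pos; lra).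
    assert (0 <= (1-l) * c) by (apply Rmult_le_pos; lra).
    assert (0 <= l * d') by (apply Rmult_le_pos; lra).
    assert (0 <= (1-l) * d) by (apply Rmult_le_pos; lra).
    assert (l * d' <= l) by nra.
    assert ((1-l) * d <= 1 - l) by nra.
    assert (0 <= l * (c' - a')) by (apply Rmult_le_pos; lra).
    assert (0 <= (1-l) * (c - a)) by (apply Rmult_le_pos; lra).
    assert (0 < l * (c' - a') + (1-l) * (c - a)).
    { destruct (Rle_lt_or_eq_dec 0 l) as [Hl0|Hl0]; [lra| |].
      assert (0 < l * (c' - a')) by (apply Rmult_lt_0_compat; lra). lra.
      subst. lra. }
    assert (0 <= l * (d' - b')) by (apply Rmult_le_pos; lra).
    assert (0 <= (1-l) * (d - b)) by (apply Rmult_le_pos; lra).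
    assert (0 < l * d' + (1-l) * d).
    { destruct (Rle_lt_or_eq_dec 0 l) as [Hl0|Hl0]; [lra| |].
      assert (0 < l * d') by (apply Rmult_lt_0_compat; lra). lra.
      subst. lra. }
    repeat split; nra. }
  apply (connect (fun l => PosP A B (a + l*(a'-a)) (c + l*(c'-c), d + l*(d'-d)))
                 (fun l => PosP B A (a + l*(a'-a)) (c + l*(c'-c), d + l*(d'-d)))).
  - replace (a + 0*(a'-a)) with a by ring. replace (c + 0*(c'-c)) with c by ring.
    replace (d + 0 * (d'-d)) with d by ring.
    apply (init A B a b); auto; simpl; lra.
  - replace (a + 1*(a'-a)) with a' by ring. replace (c + 1*(c'-c)) with c' by ring.
    replace (d + 1 * (d'-d)) with d' by ring.
    apply (init B A a' b'); auto; simpl; lra.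
  - intros l Hl. destruct (Hdom l Hl) as (H1 & H2 & H3 & H4). apply dich; auto.
  - intros l1 Hl1 Pp1 Qq1. destruct (Hdom l1 Hl1) as (H1 & _). apply (excl A B (a + l1*(a'-a)) (c + l1*(c'-c), d + l1*(d'-d))); auto.
  - intros l0 Hl0 Pp. apply (pos_open A B a a' c c' d d' l0); auto.
    intros l Hl; destruct (Hdom l Hl); tauto.
  - intros l0 Hl0 Pp. apply (pos_open B A a a' c c' d d' l0); auto.
    intros l Hl; destruct (Hdom l Hl); tauto.
Qed.

Lemma Lin D A B : rich_single_crossing D -> D A -> D B -> A <> B -> ~ prec B A -> prec A B.
Proof.
  intros [Hcl [Hsc Hrich]] HDA HDB Hne Hn.
  split; auto. intros z x Hz Hx Hbox HBxz. apply NNPP; intro HnA.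
  destruct Hbox as [Heq | Hlt].
  - subst. apply HnA. apply cl_refl; auto.
  - apply Hn. split; [congruence|]. intros z' x' Hz' Hx' Hbox' HA'. apply NNPP; intro HnB'.
    destruct Hbox' as [Heq' | Hlt'].
    + subst. apply HnB'. apply cl_refl; auto.
    + apply (CL A B x' z' x z); auto.
Qed.

Lemma fixed D Rn R0 x y : rich_single_crossing D -> (forall n, D (Rn n)) -> D R0 ->
  order_converges D Rn R0 -> inZ x -> inZ y -> strict R0 x y ->
  exists N, forall n, (N <= n)%nat -> strict (Rn n) x y.
Proof.
  intros HD HDn HD0 [Conv1 Conv2] Hx Hy Hxy.
  pose proof HD as [Hcl [Hsc Hrich]].
  assert (H0 := Hcl R0 HD0).
  assert (Hne : x <> y).
  { intro E; subst. apply (proj2 Hxy). apply cl_refl; auto. }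
  destruct x as [a b], y as [c d]. pose proof Hx as [Ha Hb]; pose proof Hy as [Hc Hd]; simpl in *.
  assert (Domcase : a <= c -> d <= b -> exists N, forall n, (N <= n)%nat -> strict (Rn n) (a,b) (c,d)).
  { intros. exists 0%nat. intros n _. apply (dom (Rn n) (a,b) (c,d) (Hcl _ (HDn n))); auto. }
  assert (Contra : c <= a -> b <= d -> False).
  { intros. apply (proj2 Hxy). apply (dom R0 (c,d) (a,b) H0); auto. }
  destruct (strict_open R0 _ _ H0 Hxy) as [e0 [He0 O]].
  destruct (Rlt_le_dec a c) as [Hac|Hca]; destruct (Rlt_le_dec b d) as [Hbd|Hdb].
  - set (e := Rmin e0 (c - a) / 4).
    assert (He : 0 < e /\ e < e0 /\ 4 * e <= c - a) by (unfold e, Rmin; destruct Rle_dec; lra).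
    assert (Zy' : inZ (c - e, d)) by (unfold inZ; simpl; lra).
    assert (Zx' : inZ (a + e, b)) by (unfold inZ; simpl; lra).
    assert (S1 : strict R0 (a,b) (c - e, d)) by (apply O; auto; simpl; rabs).
    assert (S2 : strict R0 (a + e,b) (c - e, d)) by (apply O; auto; simpl; rabs).
    destruct (Hrich (a,b) (c-e,d) Hx Zy') as [B [HDB IB]]. { unfold ltZ; simpl; lra. }
    assert (HclB := Hcl B HDB).
    assert (HneB : R0 <> B) by (intro E; subst; apply (proj2 S1); apply IB).
    assert (Hprec : prec R0 B).
    { apply (Lin D); auto. intros [_ HP].
      assert (HBx'y' : B (a+e,b) (c-e,d)).
      { apply HP; auto. right; unfold ltZ; simpl; lra. apply (proj1 S2). }
      assert (S3 : strict B (a,b) (a+e,b)).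
      { apply (proj2 (dom B (a,b) (a+e,b) HclB Hx Zx' ltac:(simpl;lra) ltac:(simpl;lra))).
        intro E; injection E; lra. }
      assert (S4 : strict B (c-e,d) (a+e,b)) by (apply (strict_trans2 B _ (a,b) _ HclB); auto; apply IB).
      apply (proj2 S4); auto. }
    destruct (Conv2 B HDB Hprec) as [N HN]. exists N. intros n Hn.
    destruct (HN n Hn) as [_ HP].
    assert (Hcn := Hcl _ (HDn n)).
    assert (Rn n (a,b) (c-e,d)) by (apply HP; auto; [right; unfold ltZ; simpl; lra| apply IB]).
    apply (strict_trans2 (Rn n) _ (c-e,d) _ Hcn); auto.
    apply (proj2 (dom (Rn n) (c-e,d) (c,d) Hcn Zy' Hy ltac:(simpl;lra) ltac:(simpl;lra))).
    intro E; injection E; lra.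
  - apply Domcase; lra.
  - exfalso; apply Contra; lra.
  - destruct (Rle_lt_or_eq_dec _ _ Hca) as [Hca'|Hca']; [destruct (Rle_lt_or_eq_dec _ _ Hdb) as [Hdb'|Hdb']|].
    + set (e := Rmin e0 (b - d) / 4).
      assert (He : 0 < e /\ e < e0 /\ 4 * e <= b - d) by (unfold e, Rmin; destruct Rle_dec; lra).
      assert (Zx' : inZ (a + e, b)) by (unfold inZ; simpl; lra).
      assert (Zy' : inZ (c, d + e)) by (unfold inZ; simpl; lra).
      assert (S2 : strict R0 (a + e,b) (c, d + e)) by (apply O; auto; simpl; rabs).
      destruct (Hrich (c,d+e) (a+e,b) Zy' Zx') as [A [HDA IA]]. { unfold ltZ; simpl; lra. }
      assert (HclA := Hcl A HDA).
      assert (HneA : A <> R0) by (intro E; subst; apply (proj2 S2); apply IA).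
      assert (Hprec : prec A R0).
      { apply (Lin D); auto. intros [_ HP]. apply (proj2 S2). apply HP; auto.
        right; unfold ltZ; simpl; lra. apply IA. }
      destruct (Conv1 A HDA Hprec) as [N HN]. exists N. intros n Hn.
      destruct (HN n Hn) as [_ HP].
      assert (Hcn := Hcl _ (HDn n)).
      apply not_R_strict; auto. intro Hyx.
      assert (HA : A (c,d) (a,b)) by (apply HP; auto; right; unfold ltZ; simpl; lra).
      assert (S3 : strict A (a,b) (a+e,b)).
      { apply (proj2 (dom A (a,b) (a+e,b) HclA Hx Zx' ltac:(simpl;lra) ltac:(simpl;lra))).
        intro E; injection E; lra. }
      assert (S4 : strict A (c,d+e) (c,d)).
      { apply (proj2 (dom A (c,d+e) (c,d) HclA Zy' Hy ltac:(simpl;lra) ltac:(simpl;lra))).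
        intro E; injection E; lra. }
      assert (S5 : strict A (a,b) (c,d+e)) by (apply (strict_trans1 A _ (a+e,b) _ HclA); auto; apply IA).
      assert (S6 : strict A (a,b) (c,d)) by (apply (strict_trans1 A _ (c,d+e) _ HclA); auto; apply S4).
      apply (proj2 S6); auto.
    + exfalso; apply Contra; lra.
    + apply Domcase; lra.
Qed.

Lemma main_dir D Rn R0 un vn u v : rich_single_crossing D -> (forall n, D (Rn n)) -> D R0 ->
  order_converges D Rn R0 -> (forall n, inZ (un n)) -> (forall n, inZ (vn n)) ->
  inZ u -> inZ v -> filterlim un eventually (locally u) -> filterlim vn eventually (locally v) ->
  (forall n, Rn n (vn n) (un n)) -> ~ R0 v u -> False.
Proof.
  intros HD HDn HD0 Hconv Hun Hvn Hu Hv Lu Lv HR Hn.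
  pose proof HD as [Hcl _].
  assert (H0 := Hcl R0 HD0).
  assert (S := not_R_strict R0 u v H0 Hu Hv Hn).
  destruct (strict_open R0 _ _ H0 S) as [e0 [He0 O]].
  set (h := e0 / 2).
  assert (hpos : 0 < h) by (unfold h; lra).
  destruct u as [a b], v as [c d]. pose proof Hu as [Ha Hb]; pose proof Hv as [Hc Hd]; simpl in *.
  set (x := (a + h, Rmax (b - h) 0)). set (y := (Rmax (c - h) 0, Rmin (d + h) 1)).
  assert (Zx : inZ x) by (unfold x, inZ; simpl; unfold Rmax; destruct Rle_dec; lra).
  assert (Zy : inZ y) by (unfold y, inZ; simpl; unfold Rmax, Rmin; repeat destruct Rle_dec; lra).
  assert (Sxy : strict R0 x y).
  { apply O; auto; unfold x, y, h in *; simpl; unfold Rmax, Rmin; repeat destruct Rle_dec; rabs. }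
  destruct (fixed D Rn R0 x y HD HDn HD0 Hconv Zx Zy Sxy) as [N1 HN1].
  destruct (proj1 (filterlim_locally un (a,b)) Lu (mkposreal h hpos)) as [N2 HN2].
  destruct (proj1 (filterlim_locally vn (c,d)) Lv (mkposreal h hpos)) as [N3 HN3].
  set (n := Nat.max N1 (Nat.max N2 N3)).
  assert (B2 := HN2 n ltac:(unfold n; lia)). assert (B3 := HN3 n ltac:(unfold n; lia)).
  apply ballP in B2. apply ballP in B3. simpl in B2, B3.
  destruct B2 as [B21 B22]. destruct B3 as [B31 B32].
  apply Rabs_def2 in B21. apply Rabs_def2 in B22. apply Rabs_def2 in B31. apply Rabs_def2 in B32.
  unfold minus, plus, opp in B21, B22, B31, B32; simpl in B21, B22, B31, B32.
  assert (Hcn := Hcl _ (HDn n)).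
  pose proof (Hun n) as [U1 U2]. pose proof (Hvn n) as [V1 V2].
  assert (R1 : Rn n (un n) x).
  { apply (proj1 (dom (Rn n) (un n) x Hcn (Hun n) Zx ltac:(unfold x; simpl; lra)
       ltac:(unfold x; simpl; unfold Rmax; destruct Rle_dec; lra))). }
  assert (R2 : Rn n y (vn n)).
  { apply (proj1 (dom (Rn n) y (vn n) Hcn Zy (Hvn n)
      ltac:(unfold y; simpl; unfold Rmax; destruct Rle_dec; lra)
      ltac:(unfold y; simpl; unfold Rmin; destruct Rle_dec; lra))). }
  apply (proj2 (HN1 n ltac:(unfold n; lia))).
  apply (cl_trans _ _ (vn n) _ Hcn); auto.
  apply (cl_trans _ _ (un n) _ Hcn); auto.
Qed.

Theorem mainTheorem3 (D : pref -> Prop) (Rn : nat -> pref) (R0 : pref)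
  (p1n p2n : nat -> R * R) (p1 p2 : R * R) :
  rich_single_crossing D ->
  (forall n, D (Rn n)) -> D R0 ->
  order_converges D Rn R0 ->
  (forall n, inZ (p1n n)) -> (forall n, inZ (p2n n)) ->
  inZ p1 -> inZ p2 ->
  filterlim p1n eventually (locally p1) ->
  filterlim p2n eventually (locally p2) ->
  (forall n, indiff (Rn n) (p1n n) (p2n n)) ->
  indiff R0 p1 p2.
Proof.
  intros HD HDn HD0 Hconv H1n H2n H1 H2 L1 L2 HI.
  split.
  - apply NNPP; intro Hn. apply (main_dir D Rn R0 p2n p1n p2 p1); auto.
    intro n; apply (proj1 (HI n)).
  - apply NNPP; intro Hn. apply (main_dir D Rn R0 p1n p2n p1 p2); auto.
    intro n; apply (proj2 (HI n)).
Qed.
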